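(* Let $n\ge 1$ and let $x=x_1x_2\cdots x_n\in \mathrm{Av}_n(312)$. Then $x$ lies in the image $\mathsf{Pop}_{\mathrm{Av}_n(312)}(\mathrm{Av}_n(312))$ if and only if $x_n=n$ and $x$ has no consecutive double descent, i.e. there is no index $i$ with $x_i>x_{i+1}>x_{i+2}$.
   Context: $\mathrm{Av}_n(312)$ is the set of permutations $x_1\cdots x_n$ of $[n]$ with no indices $i<j<k$ such that $x_j<x_k<x_i$, partially ordered by the restriction of the right weak order on $S_n$ (in $S_n$, $y\lessdot x$ iff $y$ is obtained from $x$ by swapping two adjacent entries $x_i>x_{i+1}$); it is a lattice (isomorphic to the Tamari lattice). For a finite lattice $M$, $\mathsf{Pop}_M(x)=\bigwedge(\{y\in M: y\lessdot x\}\cup\{x\})$ where covers and meets are taken in $M$. *)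

(* Defs.v *)
From mathcomp Require Import all_boot all_order all_fingroup.
Set Implicit Arguments. Unset Strict Implicit. Unset Printing Implicit Defensive.

(* A permutation x of [n] is represented by x : 'S_n, positions and values
   shifted down by one: x_i (1-based) corresponds to (x (i-1)).+1. *)

Definition av312 n (x : 'S_n) : bool :=
  [forall i : 'I_n, forall j : 'I_n, forall k : 'I_n,
     ((i < j) && (j < k)) ==> ~~ ((x j < x k) && (x k < x i))]%N.

(* Cover relation of the right weak order on S_n, oriented from the larger
   element x to the smaller y: y is obtained from x by swapping the adjacent
   entries in positions i, i+1 where x_i > x_{i+1}. *)
Definition swap_desc n (x y : 'S_n) : bool :=
  [exists i : 'I_n, exists j : 'I_n,
     [&& (val j == (val i).+1), (x j < x i)%N &
         [forall k : 'I_n, y k == x (tperm i j k)]]].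

Definition weak_le n (y x : 'S_n) : bool := connect (@swap_desc n) x y.

Definition weak_lt n (y x : 'S_n) : bool := (y != x) && weak_le y x.

Definition av_cover n (y x : 'S_n) : bool :=
  [&& av312 y, av312 x, weak_lt y x &
      ~~ [exists z : 'S_n, [&& av312 z, weak_lt y z & weak_lt z x]]].

Definition pop_set n (x : 'S_n) : pred 'S_n :=
  fun y => av_cover y x || (y == x).

Definition is_meet_av n (S : pred 'S_n) (z : 'S_n) : bool :=
  [&& av312 z, [forall y, S y ==> weak_le z y] &
      [forall w : 'S_n, (av312 w && [forall y, S y ==> weak_le w y]) ==> weak_le w z]].

Definition in_pop_image n (x : 'S_n) : bool :=
  [exists w : 'S_n, av312 w && is_meet_av (pop_set w) x].

Definition no_double_descent n (x : 'S_n) : bool :=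
  [forall i : 'I_n, forall j : 'I_n, forall k : 'I_n,
     ((val j == (val i).+1) && (val k == (val j).+1)) ==>
       ~~ ((x j < x i) && (x k < x j))]%N.

(* Main.v *)
From mathcomp Require Import all_boot all_order all_fingroup.
From mathcomp Require Import zify.
Require Import Defs.
Set Implicit Arguments. Unset Strict Implicit. Unset Printing Implicit Defensive.

Section Main.
Variable n : nat.
Local Notation N := n.+1.
Implicit Types (x y z w : 'S_N) (u v t a b c : 'I_N).

Definition pos x (u : 'I_N) : 'I_N := (x^-1)%g u.
Definition bef x u v : bool := (pos x u < pos x v)%N.

Lemma posK x u : x (pos x u) = u.
Proof. exact: permKV. Qed.
Lemma posE x i : pos x (x i) = i.
Proof. exact: permK. Qed.
Lemma pos_inj x : injective (pos x).
Proof. exact: perm_inj. Qed.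

Lemma bef_trans x a b c : bef x a b -> bef x b c -> bef x a c.
Proof. rewrite /bef; lia. Qed.
Lemma bef_irr x a : bef x a a = false.
Proof. by rewrite /bef ltnn. Qed.
Lemma bef_asym x a b : bef x a b -> ~~ bef x b a.
Proof. rewrite /bef; lia. Qed.
Lemma bef_tot x a b : a != b -> ~~ bef x a b -> bef x b a.
Proof.
move=> ab; rewrite /bef -leqNgt leq_eqVlt => /orP [/eqP /val_inj /pos_inj E|//].
by rewrite E eqxx in ab.
Qed.

Definition avp x := forall a b c, (a < b)%N -> (b < c)%N -> bef x c a -> bef x a b -> False.

Lemma av312_avp x : av312 x -> avp x.
Proof.
move=> /forallP H a b c ab bc ca ab'.
move: (H (pos x c)) => /forallP /(_ (pos x a)) /forallP /(_ (pos x b)) /implyP.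
rewrite /bef in ca ab'. by rewrite ca ab' !posK ab bc => /(_ isT).
Qed.

Lemma avp_av312 x : avp x -> av312 x.
Proof.
move=> H; apply/forallP => i; apply/forallP => j; apply/forallP => k; apply/implyP.
move=> /andP [ij jk]; apply/negP => /andP [h1 h2].
apply: (H (x j) (x k) (x i) h1 h2); by rewrite /bef !posE.
Qed.

Definition mpred x u : pred 'I_N := fun v => (u <= v)%N &&
  [forall t : 'I_N, ((u < t)%N && (t <= v)%N) ==> bef x t u].
Definition mx x u : 'I_N := [arg max_(v > u | mpred x u v) (v : nat)].

Lemma mx_spec x u : mpred x u (mx x u) /\ forall v, mpred x u v -> (v <= mx x u)%N.
Proof.
rewrite /mx; case: arg_maxnP.
  by rewrite /mpred leqnn /=; apply/forallP => t; apply/implyP; lia.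
by move=> i Pi Hi; split.
Qed.

Lemma mx_ge x u : (u <= mx x u)%N.
Proof. by case: (mx_spec x u) => /andP []. Qed.

Lemma mxE x u v : avp x -> (u < v)%N -> bef x v u = (v <= mx x u)%N.
Proof.
move=> H uv; apply/idP/idP.
- move=> bvu; apply: (mx_spec x u).2; rewrite /mpred ltnW //=.
  apply/forallP => t; apply/implyP => /andP [ut tv].
  case: (ltngtP t v) tv => // [tv _|/val_inj -> //].
  apply: bef_tot; first by apply/eqP => E; rewrite E ltnn in ut.
  by apply/negP => but; apply: (H u t v).
- move=> le; case: (mx_spec x u) => /andP [_ /forallP /(_ v) /implyP Hv] _.
  by apply: Hv; rewrite uv.
Qed.

Lemma mx_nest x u v : avp x -> (u < v)%N -> (v <= mx x u)%N -> (mx x v <= mx x u)%N.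
Proof.
move=> H uv vm.
case: (ltngtP v (mx x v)) (mx_ge x v) => // [vt _|/val_inj <- //].
have h1 : bef x (mx x v) v by rewrite mxE.
have h2 : bef x v u by rewrite mxE.
by rewrite -mxE ?(bef_trans h1 h2) //; lia.
Qed.


Definition nested (m : 'I_N -> 'I_N) :=
  (forall u, (u <= m u)%N) /\ (forall u v, (u < v)%N -> (v <= m u)%N -> (m v <= m u)%N).

Lemma mx_nested x : avp x -> nested (mx x).
Proof. by move=> H; split; [exact: mx_ge | move=> u v; exact: mx_nest]. Qed.

Definition befm (m : 'I_N -> 'I_N) u v : bool :=
  if (u < v)%N then (m u < v)%N else (v < u)%N && (u <= m v)%N.

Lemma befm_irr m u : befm m u u = false.
Proof. by rewrite /befm ltnn. Qed.

Lemma befm_tot m u v : u != v -> befm m u v || befm m v u.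
Proof.
move=> /eqP uv; rewrite /befm; case: (ltngtP u v) => h.
- by case: (ltnP (m u) v) => //= ->; rewrite h.
- by case: (ltnP (m v) u) => //=; rewrite h.
- by case: uv; apply: val_inj.
Qed.

Lemma befm_trans m u v t : nested m -> befm m u v -> befm m v t -> befm m u t.
Proof.
move=> Hm; case: (eqVneq u v) => [<-|uv0]; first by rewrite befm_irr.
case: (eqVneq v t) => [<-|vt0]; first by rewrite befm_irr.
case: (eqVneq u t) => [<- h1 h2|ut0].
  by have := befm_tot m uv0; move: h1 h2; rewrite /befm; case: (ltngtP u v); lia.
move: uv0 vt0 ut0; rewrite -!val_eqE /= => uv0 vt0 ut0.
case: Hm => m1 m2; rewrite /befm.
have := m1 u; have := m1 v; have := m1 t.
have := m2 u v; have := m2 u t; have := m2 v u; have := m2 v t; have := m2 t u; have := m2 t v.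
case: (ltngtP u v) => uv; case: (ltngtP v t) => vt; case: (ltngtP u t) => ut; lia.
Qed.

Definition rk m u := #|[pred t | befm m t u]|.

Lemma rk_lt m u v : nested m -> befm m u v -> (rk m u < rk m v)%N.
Proof.
move=> Hm uv; apply: proper_card; apply/properP; split.
  by apply/subsetP => t; rewrite !inE => tu; apply: befm_trans uv.
by exists u; rewrite !inE ?befm_irr.
Qed.

Lemma rk_small m u : (rk m u < N)%N.
Proof.
have : (rk m u <= #|predC1 u|)%N.
  apply: subset_leq_card; apply/subsetP => t; rewrite !inE => tu.
  by apply/eqP => E; rewrite E befm_irr in tu.
by rewrite cardC1 card_ord.
Qed.

Definition fr m u : 'I_N := inord (rk m u).

Lemma fr_inj m : nested m -> injective (fr m).
Proof.
move=> Hm u v E; apply/eqP; apply/negPn/negP => uv.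
have : rk m u = rk m v.
  by have := congr1 (@nat_of_ord _) E; rewrite /fr !inordK ?rk_small.
case/orP: (befm_tot m uv) => h; move: (rk_lt Hm h); lia.
Qed.

Lemma realize m : nested m -> exists x, avp x /\ forall u, mx x u = m u.
Proof.
move=> Hm; set p := perm (fr_inj Hm); exists (p^-1)%g.
have Eb : forall u v, bef (p^-1)%g u v = befm m u v.
  move=> u v; rewrite /bef /pos invgK !permE /fr !inordK ?rk_small //.
  apply/idP/idP; last exact: rk_lt.
  move=> h; case: (eqVneq u v) => [E|uv]; first by rewrite E ltnn in h.
  case/orP: (befm_tot m uv) => // h'; move: (rk_lt Hm h'); lia.
have Hav : avp (p^-1)%g.
  move=> a b c ab bc; rewrite !Eb /befm.
  case: (ltngtP c a) => ca; try lia; rewrite ab; lia.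
split=> // u; apply: val_inj => /=.
have [m1 m2] := Hm.
have key : forall v, (u < v)%N -> (v <= mx (p^-1)%g u)%N = (v <= m u)%N.
  move=> v uv; rewrite -mxE // Eb /befm.
  by case: (ltngtP v u) => h //; lia.
apply/eqP; rewrite eqn_leq; apply/andP; split; rewrite leqNgt; apply/negP => h.
- have := key (mx (p^-1)%g u); have := m1 u; have := mx_ge (p^-1)%g u.
  rewrite leqnn; lia.
- have := key (m u); have := m1 u; have := mx_ge (p^-1)%g u.
  rewrite leqnn; lia.
Qed.

Definition incl y x := forall u v, (u < v)%N -> bef y v u -> bef x v u.

Lemma incl_trans x y z : incl z y -> incl y x -> incl z x.
Proof. by move=> h1 h2 u v uv /(h1 _ _ uv) /(h2 _ _ uv). Qed.

Lemma swap_pos x y i j : (forall k, y k = x (tperm i j k)) ->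
  forall u, pos y u = tperm i j (pos x u).
Proof.
move=> H u; apply: (@perm_inj _ y); by rewrite posK H tpermK posK.
Qed.

Lemma tperm_lt (i j p q : 'I_N) : val j = (val i).+1 -> (p < q)%N ->
  ~~ ((p == i) && (q == j)) -> (tperm i j p < tperm i j q)%N.
Proof.
move=> ij pq nij.
have tpE : forall r : 'I_N, val (tperm i j r) =
   if val r == val i then val j else if val r == val j then val i else val r.
  move=> r; rewrite !val_eqE.
  have ji : j != i by apply/eqP => E; move: ij; rewrite E; lia.
  case: (eqVneq r i) => [->|ri]; first by rewrite tpermL.
  case: (eqVneq r j) => [->|rj]; first by rewrite tpermR.
  by rewrite tpermD // eq_sym.
move: nij; rewrite !tpE -!val_eqE.
case: (val p =P val i) => ?; case: (val p =P val j) => ?; case: (val q =P val i) => ?; case: (val q =P val j) => ? /=; simpl in *; lia.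
Qed.

Lemma swap_incl x y : swap_desc x y -> incl y x.
Proof.
move=> /existsP [i /existsP [j /and3P [/eqP ij lt /forallP Hk]]].
have Hy : forall k, y k = x (tperm i j k) by move=> k; apply/eqP; exact: Hk.
move=> u v uv; rewrite /bef !(swap_pos Hy) => h.
rewrite ltnNge; apply/negP; rewrite leq_eqVlt => /orP [/eqP /val_inj /pos_inj E|h'].
  by rewrite E ltnn in uv.
case: (boolP ((pos x u == i) && (pos x v == j))) => [/andP [/eqP pu /eqP pv]|nij].
  move: lt; rewrite -pu -pv !posK => h2; move: (ltn_trans h2 uv); by rewrite ltnn.
by move: (ltn_trans h (tperm_lt ij h' nij)); rewrite ltnn.
Qed.

Lemma weak_le_incl y x : weak_le y x -> incl y x.
Proof.
move=> /connectP [p Hp ->]; elim: p x Hp => [|z p IH] x /=.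
  by move=> _ u v.
by move=> /andP [sxz Hp]; apply: incl_trans (IH z Hp) (swap_incl sxz).
Qed.

Lemma perm_diff x y : x != y -> exists u v, [/\ (u < v)%N & bef x v u != bef y v u].
Proof.
move=> xy.
have [k0 Hk0] : exists k, x k != y k.
  case: (pickP (fun k => x k != y k)) => [k Hk|H]; first by exists k.
  by case/eqP: xy; apply/permP => k; apply/eqP; move: (H k) => /negbFE.
case: (@arg_minnP _ k0 (fun k => x k != y k) (fun k : 'I_N => val k) Hk0) => i Hi Hmin.
have Hy : (i < pos y (x i))%N.
  case: (ltngtP i (pos y (x i))) => // h.
  - have := Hmin (pos y (x i)); rewrite posK.
    case: (eqVneq (x (pos y (x i))) (x i)) => [/perm_inj E|ne]; first by rewrite E ltnn in h.
    by move/(_ isT) => h'; move: (leq_ltn_trans h' h); rewrite ltnn.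
  - have E : i = pos y (x i) by apply: val_inj.
    by move: (posK y (x i)); rewrite -E => E'; rewrite E' eqxx in Hi.
have Hx : (i < pos x (y i))%N.
  case: (ltngtP i (pos x (y i))) => // h.
  - have := Hmin (pos x (y i)); rewrite posK.
    case: (eqVneq (y i) (y (pos x (y i)))) => [/perm_inj E|ne]; first by rewrite -E ltnn in h.
    by move/(_ isT) => h'; move: (leq_ltn_trans h' h); rewrite ltnn.
  - have E : i = pos x (y i) by apply: val_inj.
    by move: (posK x (y i)); rewrite -E => E'; rewrite E' eqxx in Hi.
set a := x i; set b := y i.
have ab : a != b by [].
have bxa : bef x a b by rewrite /bef /a posE.
have bya : bef y b a by rewrite /bef /b posE.
case: (ltngtP a b) => h.
- exists a, b; split=> //; rewrite bya; by rewrite (negbTE (bef_asym bxa)).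
- exists b, a; split=> //; rewrite bxa; by rewrite (negbTE (bef_asym bya)).
- by case/eqP: ab; apply: val_inj.
Qed.

Lemma incl_eq x y : incl x y -> incl y x -> x = y.
Proof.
move=> h1 h2; apply/eqP; apply/negPn/negP => /perm_diff [u [v [uv]]].
by case: (boolP (bef x v u)) => h; [rewrite (h1 _ _ uv h) | case: (boolP (bef y v u)) => // /(h2 _ _ uv); rewrite (negbTE h)].
Qed.

Lemma adj_bad x y : incl y x -> forall u v, (u < v)%N -> bef x v u -> ~~ bef y v u ->
  exists u' v', [/\ (u' < v')%N, bef x v' u', ~~ bef y v' u' &
                  (pos x u' : nat) = (pos x v').+1].
Proof.
move=> Hinc.
suff H : forall d u v, (pos x u - pos x v <= d)%N -> (u < v)%N -> bef x v u ->
    ~~ bef y v u -> exists u' v', [/\ (u' < v')%N, bef x v' u', ~~ bef y v' u' &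
                  (pos x u' : nat) = (pos x v').+1].
  by move=> u v; apply: (H _ u v (leqnn _)).
elim=> [|d IH] u v hd uv bx ny; first by move: hd bx; rewrite /bef; lia.
case: (eqVneq (pos x u : nat) (pos x v).+1) => [E|ne]; first by exists u, v.
have Hlt : ((pos x v).+1 < N)%N by move: bx; rewrite /bef => h; have := ltn_ord (pos x u); lia.
set k : 'I_N := inord (pos x v).+1.
have kv : (k : nat) = (pos x v).+1 by rewrite /k inordK.
set c := x k.
have pc : pos x c = k by rewrite /c posE.
have pvk : (pos x v < pos x c)%N by rewrite pc kv.
have pku : (pos x c < pos x u)%N by move: bx ne; rewrite /bef pc kv; lia.
have byuv : bef y u v.
  by apply: bef_tot => //; apply/eqP => E; rewrite E ltnn in uv.
have cu : c != u by apply/eqP => E; move: pku; rewrite E ltnn.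
have cv : c != v by apply/eqP => E; move: pvk; rewrite E ltnn.
have bxvc : bef x v c by [].
have bxcu : bef x c u by [].
case: (ltngtP c u) => cu'; last by case/eqP: cu; apply: val_inj.
-
  have bycu : bef y c u.
    apply: bef_tot; first by rewrite eq_sym.
    apply/negP => h; by have := bef_asym (Hinc _ _ cu' h); rewrite bxcu.
  apply: (IH c v) => //.
  + by move: hd; lia.
  + exact: ltn_trans uv.
  + by apply: bef_asym; apply: bef_trans bycu byuv.
- case: (ltngtP c v) => cv'; last by case/eqP: cv; apply: val_inj.
  +
    case: (boolP (bef y c u)) => h.
    * apply: (IH c v) => //; first by move: hd; lia.
      by apply: bef_asym; apply: bef_trans h byuv.
    * apply: (IH u c) => //; by move: hd; lia.
  +
    have byvc : bef y v c.
      apply: bef_tot; first exact: cv.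
      apply/negP => h; by have := bef_asym (Hinc _ _ cv' h); rewrite bxvc.
    apply: (IH u c) => //; first by move: hd; lia.
    by apply: bef_asym; apply: bef_trans byuv byvc.
Qed.

Definition ninv x := #|[set p : 'I_N * 'I_N | (p.1 < p.2)%N && bef x p.2 p.1]|.

Lemma step x y : incl y x -> x != y ->
  exists x', [/\ swap_desc x x', incl y x' & (ninv x' < ninv x)%N].
Proof.
move=> Hinc xy.
have [u [v [uv d]]] := perm_diff xy.
have bx : bef x v u.
  case: (boolP (bef y v u)) => h; first exact: Hinc.
  by move: d; rewrite (negbTE h); case: (bef x v u).
have ny : ~~ bef y v u by move: d; rewrite bx; case: (bef y v u).
have [u' [v' [uv' bx' ny' adj]]] := adj_bad Hinc uv bx ny.
set i := pos x v'; set j := pos x u'.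
have Hx' : forall k, (tperm i j * x)%g k = x (tperm i j k) by move=> k; rewrite permM.
exists (tperm i j * x)%g; split.
- apply/existsP; exists i; apply/existsP; exists j; apply/and3P; split.
  + by apply/eqP.
  + by rewrite /i /j !posK.
  + by apply/forallP => k; rewrite Hx'.
- move=> a b ab hy; have hx := Hinc _ _ ab hy.
  rewrite /bef !(swap_pos Hx'); apply: tperm_lt => //.
  apply/negP => /andP [/eqP E1 /eqP E2].
  move: E1 E2; rewrite /i /j => /pos_inj E1 /pos_inj E2.
  by move: hy ny'; rewrite E1 E2 => ->.
- apply: proper_card; apply/properP; split.
  + apply/subsetP => p; rewrite !inE => /andP [p12 hp]; rewrite p12 /=.
    apply: (swap_incl _ p12 hp).
    apply/existsP; exists i; apply/existsP; exists j; apply/and3P; split.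
    * by apply/eqP.
    * by rewrite /i /j !posK.
    * by apply/forallP => k; rewrite Hx'.
  + exists (u', v'); rewrite !inE /= uv' //=.
    rewrite /bef !(swap_pos Hx') -/i -/j tpermL tpermR.
    by rewrite -leqNgt ltnW // /i /j adj.
Qed.

Lemma incl_weak_le x y : incl y x -> weak_le y x.
Proof.
move: {2}(ninv x) (leqnn (ninv x)) => k; elim: k x => [|k IH] x Hk Hinc.
- case: (eqVneq x y) => [->|xy]; first exact: connect0.
  by have [x' [_ _ lt]] := step Hinc xy; move: lt Hk; lia.
- case: (eqVneq x y) => [->|xy]; first exact: connect0.
  have [x' [sw inc lt]] := step Hinc xy.
  apply: connect_trans (connect1 sw) (IH x' _ inc); lia.
Qed.

Lemma weak_leE x y : weak_le y x <-> incl y x.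
Proof. by split; [exact: weak_le_incl | exact: incl_weak_le]. Qed.

Lemma le_mx x y : avp x -> avp y -> (weak_le y x <-> forall u, (mx y u <= mx x u)%N).
Proof.
move=> hx hy; rewrite weak_leE; split.
- move=> h u; case: (ltngtP u (mx y u)) (mx_ge y u) => // [lt _|E _].
  + by rewrite -mxE // h // mxE.
  + by rewrite -E mx_ge.
- move=> h u v uv; rewrite !mxE // => le; exact: leq_trans le (h u).
Qed.

Lemma eq_mx x y : avp x -> avp y -> (forall u, mx x u = mx y u) -> x = y.
Proof.
move=> hx hy E; apply: incl_eq; apply/weak_leE/le_mx => // u; by rewrite E.
Qed.

Lemma nested_fix m u : nested m -> m (m u) = m u.
Proof.
move=> [m1 m2]; apply: val_inj; apply/eqP; rewrite eqn_leq m1 andbT.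
case: (ltngtP u (m u)) (m1 u) => // [lt _|E _]; first by apply: m2.
have E' : m u = u by apply: val_inj.
by rewrite !E'.
Qed.

Definition am (m : 'I_N -> 'I_N) b : 'I_N :=
  [arg min_(v < m b | (b < v)%N && (m v == m b)) (v : nat)].

Lemma am_spec m b : nested m -> (b < m b)%N ->
  [/\ (b < am m b)%N, m (am m b) = m b &
      forall v, (b < v)%N -> m v = m b -> (am m b <= v)%N].
Proof.
move=> Hm bm; rewrite /am; case: arg_minnP.
  by rewrite bm nested_fix // eqxx.
move=> i /andP [bi /eqP mi] H; split=> // v bv mv; apply: H; by rewrite bv mv eqxx.
Qed.

Lemma am_gt m b : nested m -> (b < m b)%N -> (b < am m b)%N.
Proof. by move=> Hm bm; case: (am_spec Hm bm). Qed.

Lemma am_le m b : nested m -> (b < m b)%N -> (am m b <= m b)%N.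
Proof. move=> Hm bm; case: (am_spec Hm bm) => _ E _; rewrite -E; exact: Hm.1. Qed.

Lemma am_inner m b v : nested m -> (b < m b)%N -> (b < v)%N -> (v < am m b)%N ->
  (m v < am m b)%N /\ (m v < m b)%N.
Proof.
move=> Hm bm bv va; have [ba ma amin] := am_spec Hm bm.
have aleq := am_le Hm bm.
have [m1 m2] := Hm.
have h1 : (m v <= m b)%N by apply: m2 => //; lia.
have h2 : (m v != m b :> nat).
  apply/eqP => E; have := amin v bv (val_inj E); lia.
have h3 : (m v < m b)%N by lia.
split=> //; rewrite ltnNge; apply/negP => h.
have := m2 v (am m b) va h; rewrite ma; lia.
Qed.

Definition yb (m : 'I_N -> 'I_N) b : 'I_N -> 'I_N :=
  fun u => if u == b then inord (am m b).-1 else m u.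

Lemma yb_b m b : (yb m b b : nat) = (am m b).-1.
Proof. rewrite /yb eqxx inordK //; have := ltn_ord (am m b); lia. Qed.
Lemma yb_nb m b u : u != b -> yb m b u = m u.
Proof. by rewrite /yb => /negbTE ->. Qed.

Lemma yb_nested m b : nested m -> (b < m b)%N -> nested (yb m b).
Proof.
move=> Hm bm; have [ba ma amin] := am_spec Hm bm; have aleq := am_le Hm bm.
have [m1 m2] := Hm.
split.
- move=> u; case: (eqVneq u b) => [->|ub]; first by rewrite yb_b; lia.
  by rewrite yb_nb.
- move=> u v uv; case: (eqVneq u b) => [Eu|ub]; case: (eqVneq v b) => [Ev|vb].
  + by move: uv; rewrite Eu Ev ltnn.
  + rewrite Eu in uv *; rewrite yb_b yb_nb // => va.
    have va' : (v < am m b)%N by lia.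
    have [h _] := am_inner Hm bm uv va'; lia.
  + rewrite Ev in uv *; rewrite yb_b yb_nb // => bu; have := m2 u b uv bu; lia.
  + by rewrite !yb_nb //; apply: m2.
Qed.

Definition Pm (m : 'I_N -> 'I_N) : 'I_N -> 'I_N :=
  fun u => if (u < m u)%N then inord (am m u).-1 else u.

Lemma Pm_val m u : (Pm m u : nat) = if (u < m u)%N then (am m u).-1 else u.
Proof.
rewrite /Pm; case: ifP => // _; rewrite inordK //; have := ltn_ord (am m u); lia.
Qed.

Lemma Pm_le m u : nested m -> (Pm m u <= m u)%N.
Proof.
move=> Hm; rewrite Pm_val; case: ifP => [h|_]; last exact: Hm.1.
have := am_le Hm h; have := am_gt Hm h; lia.
Qed.

Lemma Pm_nested m : nested m -> nested (Pm m).
Proof.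
move=> Hm; have [m1 m2] := Hm; split.
- move=> u; rewrite Pm_val; case: ifP => // h; have := am_gt Hm h; lia.
- move=> u v uv; rewrite (Pm_val m u); case: ifP => [h|_]; last lia.
  move=> va; have va' : (v < am m u)%N by have := am_gt Hm h; lia.
  have [h1 _] := am_inner Hm h uv va'.
  have := Pm_le v Hm; lia.
Qed.

Lemma Pm_yb m b u : nested m -> (b < m b)%N -> (Pm m u <= yb m b u)%N.
Proof.
move=> Hm bm; case: (eqVneq u b) => [->|ub].
  by rewrite yb_b Pm_val bm.
by rewrite yb_nb //; exact: Pm_le.
Qed.

Lemma C1 (m c : 'I_N -> 'I_N) : nested m -> nested c -> (forall u, (c u <= m u)%N) ->
  (exists u, c u != m u) -> exists b, (b < m b)%N /\ (c b < am m b)%N.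
Proof.
move=> Hm Hc cm [u0 hu0].
case: (@arg_maxnP _ u0 (fun b => c b != m b) (fun b : 'I_N => (b : nat)) hu0) => b hb bmax.
have above : forall v, (b < v)%N -> c v = m v.
  move=> v bv; apply/eqP; apply/negPn/negP => h; have := bmax v h; lia.
have bm : (b < m b)%N.
  have := Hc.1 b; have := cm b.
  have : (c b : nat) != m b by rewrite val_eqE.
  lia.
exists b; split=> //; rewrite ltnNge; apply/negP => h.
have [ba ma _] := am_spec Hm bm.
have := Hc.2 b (am m b) ba h; rewrite above // ma => h2.
have := cm b; have : (c b : nat) != m b by rewrite val_eqE.
lia.
Qed.

Lemma neq_mx x y : avp x -> avp y -> (x != y) = [exists u, mx x u != mx y u].
Proof.
move=> hx hy; apply/idP/idP.
- move=> xy; case: existsP => // H.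
  case/eqP: xy; apply: eq_mx => // u; apply/eqP; case: eqP => // ne.
  by case: H; exists u; apply/eqP.
- move=> /existsP [u hu]; apply/eqP => E; by rewrite E eqxx in hu.
Qed.

Lemma yb_le_m m b u : nested m -> (b < m b)%N -> (yb m b u <= m u)%N.
Proof.
move=> Hm bm; case: (eqVneq u b) => [->|ub]; last by rewrite yb_nb.
rewrite yb_b; have := am_le Hm bm; lia.
Qed.

Lemma yb_ne_m m b : nested m -> (b < m b)%N -> yb m b b != m b.
Proof.
move=> Hm bm; apply/eqP => E; have := congr1 (@nat_of_ord _) E; rewrite yb_b.
have := am_le Hm bm; have := am_gt Hm bm; lia.
Qed.

Lemma yb_lt w y b : avp w -> avp y -> (b < mx w b)%N ->
  (forall u, mx y u = yb (mx w) b u) -> weak_lt y w.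
Proof.
move=> hw hy bm E; have Hm := mx_nested hw.
apply/andP; split.
- by rewrite neq_mx //; apply/existsP; exists b; rewrite E yb_ne_m.
- by apply/le_mx => // u; rewrite E yb_le_m.
Qed.

Lemma cover_char w (c : 'S_N) : avp w -> av_cover c w ->
  exists b, (b < mx w b)%N /\ forall u, mx c u = yb (mx w) b u.
Proof.
move=> hw /and4P [/av312_avp hc _ /andP [cw lecw] /existsPn nz].
have Hm := mx_nested hw.
have [b [bm cb]] : exists b, (b < mx w b)%N /\ (mx c b < am (mx w) b)%N.
  apply: C1 => //; first exact: mx_nested.
    exact: (le_mx hw hc).1 lecw.
  by move: cw; rewrite neq_mx // => /existsP.
have [y [hy Ey]] := realize (yb_nested Hm bm).
exists b; split=> //.
have ley : forall u, (mx c u <= mx y u)%N.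
  move=> u; rewrite Ey; case: (eqVneq u b) => [->|ub]; first by rewrite yb_b; lia.
  by rewrite yb_nb //; exact: (le_mx hw hc).1 lecw u.
suff -> : c = y by [].
apply/eqP; apply/negPn/negP => cy.
have := nz y; rewrite (avp_av312 hy) /= /weak_lt cy.
have -> : weak_le c y by apply/(le_mx hy hc).
by move: (yb_lt hw hy bm Ey); rewrite /weak_lt => ->.
Qed.

Lemma yb_cover w y b : avp w -> avp y -> (b < mx w b)%N ->
  (forall u, mx y u = yb (mx w) b u) -> av_cover y w.
Proof.
move=> hw hy bm Ey; have Hm := mx_nested hw.
apply/and4P; split; [exact: avp_av312 hy | exact: avp_av312 hw | exact: (yb_lt hw hy bm Ey) |].
apply/existsPn => z; apply/negP => /and3P [/av312_avp hz /andP [yz leyz] /andP [zw lezw]].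
have [b' [bm' zb']] : exists b, (b < mx w b)%N /\ (mx z b < am (mx w) b)%N.
  apply: C1 => //; first exact: mx_nested.
    exact: (le_mx hw hz).1 lezw.
  by move: zw; rewrite neq_mx // => /existsP.
have leyz' := (le_mx hz hy).1 leyz.
have bb : b' = b.
  apply/eqP; apply/negPn/negP => ne.
  have := leyz' b'; rewrite Ey yb_nb //; have := am_le Hm bm'; lia.
subst b'.
have lezy : weak_le z y.
  apply/(le_mx hy hz) => u; rewrite Ey; case: (eqVneq u b) => [->|ub]; first by rewrite yb_b; lia.
  by rewrite yb_nb //; exact: (le_mx hw hz).1 lezw u.
have : y = z by apply: incl_eq; apply/weak_leE.
by move=> E; rewrite E eqxx in yz.
Qed.

Lemma pop_lb w z : avp w -> avp z -> (forall u, (mx z u <= Pm (mx w) u)%N) ->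
  forall y, pop_set w y -> weak_le z y.
Proof.
move=> hw hz H y; have Hm := mx_nested hw.
rewrite /pop_set => /orP [cov|/eqP ->].
- have hy : avp y by case/and4P: cov => /av312_avp.
  have [b [bm Ey]] := cover_char hw cov.
  apply/(le_mx hy hz) => u; rewrite Ey; exact: leq_trans (H u) (Pm_yb u Hm bm).
- apply/(le_mx hw hz) => u; exact: leq_trans (H u) (Pm_le u Hm).
Qed.

Lemma pop_ub w (v : 'S_N) : avp w -> avp v -> (forall y, pop_set w y -> weak_le v y) ->
  forall u, (mx v u <= Pm (mx w) u)%N.
Proof.
move=> hw hv H u; have Hm := mx_nested hw.
have lvw : forall u, (mx v u <= mx w u)%N.
  by apply/(le_mx hw hv); apply: H; rewrite /pop_set eqxx orbT.
rewrite Pm_val; case: ifP => [bm|nb].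
- have [y [hy Ey]] := realize (yb_nested Hm bm).
  have cov := yb_cover hw hy bm Ey.
  have py : pop_set w y by rewrite /pop_set cov.
  by have := (le_mx hy hv).1 (H y py) u; rewrite Ey yb_b.
- have := lvw u; have := mx_ge w u; move: nb; lia.
Qed.

Lemma meet_char w x : avp w ->
  is_meet_av (pop_set w) x <-> avp x /\ forall u, mx x u = Pm (mx w) u.
Proof.
move=> hw; have Hm := mx_nested hw.
have [z [hz Ez]] := realize (Pm_nested Hm).
have zlb : forall y, pop_set w y -> weak_le z y.
  by apply: pop_lb => // u; rewrite Ez.
split.
- move=> /and3P [/av312_avp hx /forallP lb /forallP univ]; split=> //.
  have h1 := pop_ub hw hx (fun y py => implyP (lb y) py).
  have h2 : weak_le z x.
    apply: (implyP (univ z)); rewrite (avp_av312 hz) /=.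
    by apply/forallP => y; apply/implyP; exact: zlb.
  move=> u; apply: val_inj; apply/eqP; rewrite eqn_leq h1 /=.
  by rewrite -Ez; exact: (le_mx hx hz).1 h2 u.
- move=> [hx Ex]; apply/and3P; split; first exact: avp_av312.
  + apply/forallP => y; apply/implyP; apply: pop_lb => // u; by rewrite Ex.
  + apply/forallP => v; apply/implyP => /andP [/av312_avp hv /forallP lb].
    apply/(le_mx hx hv) => u; rewrite Ex; apply: pop_ub => // y py.
    exact: (implyP (lb y)).
Qed.

Lemma top_char x : avp x ->
  (x ord_max = ord_max <-> forall v : 'I_N, (v < n)%N -> (mx x v < n)%N).
Proof.
move=> hx; split.
- move=> E v vn; have pt : pos x ord_max = ord_max by rewrite -{1}E posE.
  have nb : ~~ bef x ord_max v by rewrite /bef pt -leqNgt -ltnS ltn_ord.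
  by move: nb; rewrite mxE //= -ltnNge.
- move=> H; set v := x ord_max.
  have pv : pos x v = ord_max by rewrite /v posE.
  case: (eqVneq v ord_max) => [E|vt]; first by [].
  have vn : (v < n)%N by have := ltn_ord v; move: vt; rewrite -val_eqE /=; lia.
  have nb : ~~ bef x ord_max v by rewrite mxE //= -ltnNge H.
  have vt' : ord_max != v by rewrite eq_sym.
  have := bef_tot vt' nb; rewrite /bef pv /= => h.
  by have := ltn_ord (pos x ord_max); lia.
Qed.

Lemma Kpred x b : avp x -> (b < mx x b)%N ->
  exists q : 'I_N, [/\ (q : nat).+1 = pos x b, (b < x q)%N & (x q <= mx x b)%N].
Proof.
move=> hx bm.
have btb : bef x (mx x b) b by rewrite mxE.
have p0 : (0 < pos x b)%N by move: btb; rewrite /bef; lia.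
set q : 'I_N := inord (pos x b).-1.
have qv : (q : nat) = (pos x b).-1 by rewrite /q inordK //; have := ltn_ord (pos x b); lia.
have qv' : (q : nat).+1 = pos x b by rewrite qv; lia.
have h : (b < x q)%N.
  rewrite ltnNge leq_eqVlt; apply/negP => /orP [/eqP E|lt].
    have E' : x q = b by apply: val_inj.
    by move: qv'; rewrite -E' posE; lia.
  have baq : bef x (x q) b by rewrite /bef posE -qv'.
  have tq : bef x (mx x b) (x q).
    move: btb; rewrite /bef posE -qv' => h.
    case: (ltngtP (pos x (mx x b)) q) => // h'; first by lia.
    have E : pos x (mx x b) = q by apply: val_inj.
    by move: (posK x (mx x b)); rewrite E => E'; move: lt bm; rewrite E'; lia.
  exact: (hx (x q) b (mx x b) lt bm tq baq).
exists q; split=> //.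
by rewrite -mxE // /bef posE -qv'.
Qed.

Lemma ndd_B x : avp x -> no_double_descent x ->
  forall c v, (c < v)%N -> (v < mx x c)%N -> (mx x v < mx x c)%N.
Proof.
move=> hx /forallP ndd.
have noDD : forall (i j k : 'I_N), (j : nat) = i.+1 -> (k : nat) = j.+1 ->
    (x j < x i)%N -> (x k < x j)%N -> False.
  move=> i j k ji kj h1 h2.
  move: (ndd i) => /forallP /(_ j) /forallP /(_ k) /implyP H.
  have c1 : (val j == (val i).+1) && (val k == (val j).+1) by apply/andP; split; apply/eqP.
  by move: (H c1); rewrite h1 h2.
have key : forall c, (c < mx x c)%N -> forall q : 'I_N, (q : nat).+1 = pos x c ->
    (c < x q)%N -> ~~ (x q < mx x (x q))%N.
  move=> c cm q qc cq; apply/negP => am.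
  have [q' [q'a aq' _]] := Kpred hx am.
  apply: (noDD q' q (pos x c)); rewrite ?posK //; move: q'a; rewrite posE //.
move=> c v cv vm; rewrite ltnNge; apply/negP => hv.
have [m1 m2] := mx_nested hx.
have cm : (c < mx x c)%N by lia.
have [q [qc cq aq]] := Kpred hx cm.
have nk := key c cm q qc cq.
case: (eqVneq v (x q)) => [E|va].
  by move: nk; rewrite -E; lia.
have bvc : bef x v c by rewrite mxE //; lia.
have bva : bef x v (x q).
  move: bvc; rewrite /bef posE -qc => h.
  case: (ltngtP (pos x v) q) => // h'; first by lia.
  have E : pos x v = q by apply: val_inj.
  by move: (posK x v); rewrite E => E'; rewrite E' eqxx in va.
case: (ltngtP v (x q)) => h.
- have : bef x (x q) v by rewrite mxE //; have := m2 c v cv (ltnW vm); lia.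
  by move/bef_asym; rewrite bva.
- have : (v <= mx x (x q))%N by rewrite -mxE.
  by move: nk h; lia.
- by case/eqP: va; apply: val_inj.
Qed.

Lemma B_ndd x : avp x ->
  (forall c v, (c < v)%N -> (v < mx x c)%N -> (mx x v < mx x c)%N) ->
  no_double_descent x.
Proof.
move=> hx HB; apply/forallP => i; apply/forallP => j; apply/forallP => k.
apply/implyP => /andP [/eqP ji /eqP kj]; apply/negP => /andP [h1 h2].
have [m1 m2] := mx_nested hx.
simpl in ji, kj.
have bjk : bef x (x j) (x k) by rewrite /bef !posE; lia.
have bik : bef x (x i) (x k) by rewrite /bef !posE; lia.
have Hb : (x j < mx x (x k))%N.
  have ki : (x k < x i)%N := ltn_trans h2 h1.
  by have := bik; rewrite mxE // => h; lia.
have Hc : (mx x (x k) <= mx x (x j))%N.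
  rewrite -mxE //.
  have bt : bef x (mx x (x k)) (x k) by rewrite mxE //; lia.
  move: bt; rewrite /bef posE posE => h.
  case: (ltngtP (pos x (mx x (x k))) j) => // h'; first by lia.
  have E : pos x (mx x (x k)) = j by apply: val_inj.
  by move: (posK x (mx x (x k))); rewrite E => E'; move: Hb; rewrite E'; lia.
have := HB (x k) (x j) h2 Hb; lia.
Qed.

Lemma PmA m : nested m -> forall v : 'I_N, (v < n)%N -> (Pm m v < n)%N.
Proof.
move=> Hm v vn; rewrite Pm_val; case: ifP => // h.
have := ltn_ord (am m v); have := am_gt Hm h; lia.
Qed.

Lemma PmB m : nested m ->
  forall c v, (c < v)%N -> (v < Pm m c)%N -> (Pm m v < Pm m c)%N.
Proof.
move=> Hm c v cv; rewrite (Pm_val m c); case: ifP => [h|_]; last lia.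
move=> va; have va' : (v < am m c)%N by have := am_gt Hm h; lia.
have [h1 _] := am_inner Hm h cv va'.
rewrite Pm_val; case: ifP => [h2|_]; last lia.
have := am_le Hm h2; lia.
Qed.

Section Wcons.
Variable m : 'I_N -> 'I_N.
Hypothesis Hm : nested m.
Hypothesis HA : forall v : 'I_N, (v < n)%N -> (m v < n)%N.
Hypothesis HB : forall c v : 'I_N, (c < v)%N -> (v < m c)%N -> (m v < m c)%N.

Definition Fp (k : 'I_N) : pred 'I_N := fun t => [&& (k < t)%N, m t == t &
  [forall s : 'I_N, ((k < s)%N && (s < t)%N) ==> (m s < t)%N]].
Definition Fk k : 'I_N := [arg min_(t < ord_max | Fp k t) (t : nat)].

Lemma m_top : m ord_max = ord_max.
Proof. apply: val_inj; have := Hm.1 ord_max; have := ltn_ord (m ord_max); simpl; lia. Qed.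

Lemma Fk_spec (k : 'I_N) : (k < n)%N -> [/\ (k < Fk k)%N, m (Fk k) = Fk k,
  (forall s : 'I_N, (k < s)%N -> (s < Fk k)%N -> (m s < Fk k)%N) &
  (forall t : 'I_N, (k < t)%N -> m t = t ->
     (forall s : 'I_N, (k < s)%N -> (s < t)%N -> (m s < t)%N) -> (Fk k <= t)%N)].
Proof.
move=> kn; rewrite /Fk; case: arg_minnP.
- rewrite /Fp /= kn m_top eqxx /=; apply/forallP => s; apply/implyP => /andP [_ sn].
  exact: HA.
- move=> t /and3P [kt /eqP mt /forallP fs] tmin; split=> //.
  + by move=> s ks st; move: (fs s) => /implyP; apply; rewrite ks st.
  + move=> t' kt' mt' fs'; apply: tmin; rewrite /Fp kt' mt' eqxx /=.
    by apply/forallP => s; apply/implyP => /andP [h1 h2]; apply: fs'.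
Qed.

Definition W c : 'I_N := if m c == c then c else Fk (m c).

Lemma nf_lt c : m c != c -> (c < m c)%N /\ (m c < n)%N.
Proof.
move=> h; have c1 := Hm.1 c.
have cm : (c < m c)%N by move: h; rewrite -val_eqE /=; lia.
split=> //; apply: HA; have := ltn_ord (m c); lia.
Qed.

Lemma W_fix c : m c = c -> W c = c.
Proof. by rewrite /W => ->; rewrite eqxx. Qed.

Lemma W_nf c : m c != c -> W c = Fk (m c).
Proof. by rewrite /W => /negbTE ->. Qed.

Lemma W_gt c : m c != c -> (m c < W c)%N.
Proof. move=> h; have [_ mn] := nf_lt h; rewrite W_nf //; by case: (Fk_spec mn). Qed.

Lemma W_inner c v : m c != c -> (c < v)%N -> (v <= m c)%N -> (W v <= m c)%N.
Proof.
move=> h cv vm; have [cm mn] := nf_lt h.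
case: (eqVneq (m v) v) => [E|ne]; first by rewrite W_fix.
have vlt : (v < m c)%N.
  case: (ltngtP v (m c)) vm => // E _.
  have E' : v = m c by apply: val_inj.
  by move: ne; rewrite E' nested_fix // eqxx.
have mvc := HB cv vlt.
have [_ mvn] := nf_lt ne.
rewrite W_nf //; case: (Fk_spec mvn) => _ _ _; apply => //.
- exact: nested_fix.
- move=> s ms sm; apply: HB => //; have := Hm.1 v; lia.
Qed.

Lemma W_t0 c (t0 : 'I_N) : m c != c -> (t0 : nat) = (m c).+1 -> W t0 = W c.
Proof.
move=> h t0v; have [cm mn] := nf_lt h.
have [k1 k2 k3 k4] := Fk_spec mn.
rewrite (W_nf h).
case: (eqVneq (m t0) t0) => [E|ne].
- rewrite W_fix //.
  have le1 : (Fk (m c) <= t0)%N.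
    by apply: k4 => //; [rewrite t0v | move=> s h1 h2]; lia.
  apply: val_inj => /=; lia.
- have [tm tn] := nf_lt ne.
  have [l1 l2 l3 l4] := Fk_spec tn.
  rewrite W_nf //.
  have le1 : (Fk (m c) <= Fk (m t0))%N.
    apply: k4 => //; first by lia.
    move=> s ks st; case: (ltnP (m t0) s) => hs; first exact: l3.
    case: (eqVneq s t0) => [->|st0]; first by lia.
    have := Hm.2 t0 s; move: st0; rewrite -val_eqE /=; lia.
  have big : (m t0 < Fk (m c))%N.
    rewrite ltnNge; apply/negP => hle.
    case: (eqVneq (Fk (m c)) t0) => [E|ne'].
      by move: ne; rewrite -E k2 eqxx.
    have h' : (t0 < Fk (m c))%N by move: ne'; rewrite -val_eqE /=; lia.
    have h'' : (m c < t0)%N by lia.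
    have := k3 t0 h'' h'; lia.
  have le2 : (Fk (m t0) <= Fk (m c))%N.
    by apply: l4 => //; move=> s h1 h2; apply: k3 => //; lia.
  apply: val_inj => /=; lia.
Qed.

Lemma W_nested : nested W.
Proof.
split.
- move=> u; case: (eqVneq (m u) u) => [E|ne]; first by rewrite W_fix.
  have := W_gt ne; have := Hm.1 u; lia.
- move=> u v uv; case: (eqVneq (m u) u) => [E|ne]; first by rewrite W_fix //; lia.
  have [um mn] := nf_lt ne.
  have [k1 k2 k3 k4] := Fk_spec mn.
  move=> vW; case: (leqP v (m u)) => vm.
    have := W_inner ne uv vm; have := W_gt ne; lia.
  move: vW; rewrite W_nf // => vW.
  case: (eqVneq v (Fk (m u))) => [->|vne].
    by rewrite W_fix.
  have vF : (v < Fk (m u))%N by move: vne vW; rewrite -val_eqE /=; lia.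
  have mvF := k3 v vm vF.
  case: (eqVneq (m v) v) => [E|ne2]; first by rewrite W_fix //; lia.
  have [_ mvn] := nf_lt ne2.
  rewrite W_nf //; case: (Fk_spec mvn) => _ _ _; apply => //.
  move=> s h1 h2; apply: k3 => //; have := Hm.1 v; lia.
Qed.

Lemma PmW c : Pm W c = m c.
Proof.
case: (eqVneq (m c) c) => [E|ne].
- rewrite /Pm W_fix // ltnn E; by [].
- have [cm mn] := nf_lt ne.
  have cW : (c < W c)%N by have := W_gt ne; lia.
  set t0 : 'I_N := inord (m c).+1.
  have t0v : (t0 : nat) = (m c).+1 by rewrite /t0 inordK.
  have [a1 a2 a3] := am_spec W_nested cW.
  have aeq : (am W c : nat) = t0.
    apply/eqP; rewrite eqn_leq; apply/andP; split.
    + apply: a3; [by rewrite t0v; lia | exact: W_t0].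
    + rewrite leqNgt; apply/negP => lt.
      have le' : (am W c <= m c)%N by move: lt; rewrite t0v; lia.
      by have := W_inner ne a1 le'; rewrite a2; have := W_gt ne; lia.
  apply: val_inj => /=; rewrite Pm_val cW aeq t0v //.
Qed.

End Wcons.

Lemma Pm_ext f g u : nested f -> nested g -> (forall v, f v = g v) -> Pm f u = Pm g u.
Proof.
move=> Hf Hg E; rewrite /Pm E; case: ifP => // h.
have h' : (u < f u)%N by rewrite E.
have [a1 a2 a3] := am_spec Hf h'; have [b1 b2 b3] := am_spec Hg h.
have e1 : (am f u <= am g u)%N by apply: a3 => //; rewrite !E.
have e2 : (am g u <= am f u)%N by apply: b3 => //; rewrite -!E.
by have -> : am f u = am g u by apply: val_inj => /=; lia.
Qed.

Lemma main_thm x : av312 x ->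
  (in_pop_image x <-> (x ord_max = ord_max /\ no_double_descent x)).
Proof.
move=> /av312_avp hx; split.
- move=> /existsP [w /andP [/av312_avp hw mt]].
  have [_ Ex] := (meet_char x hw).1 mt.
  have Hm := mx_nested hw.
  split.
  + apply/(top_char hx) => v vn; rewrite Ex; exact: PmA.
  + apply: B_ndd => // c v; rewrite !Ex; exact: PmB.
- move=> [ht hndd].
  have HA := (top_char hx).1 ht.
  have HB := ndd_B hx hndd.
  have Hm := mx_nested hx.
  have HW := W_nested Hm HA HB.
  have [w [hw Ew]] := realize HW.
  apply/existsP; exists w; rewrite (avp_av312 hw) /=.
  apply/(meet_char x hw); split=> // u.
  by rewrite (Pm_ext u (mx_nested hw) HW Ew) PmW.
Qed.

End Main.

Theorem theorem4p8 (n : nat) (x : 'S_n.+1) :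
  av312 x ->
  (in_pop_image x <-> (x ord_max = ord_max /\ no_double_descent x)).
Proof. exact: main_thm. Qed.
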